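(* Let $G$ and $K$ be countable sets, let $m\in\mathbb N^+$, let $T\in\Lambda^G_m$ be an $m$-parent transmission function over $G$, and let $\beta:G\rightarrow K$ be a surjective function such that $T$ is ambivalent under $\beta$, with theme transmission function $T^{\overrightarrow\beta}\in\Lambda^K_m$. Then for every $p\in\Lambda^G$, \[\Xi_\beta(\mathcal V_T p)=\mathcal V_{T^{\overrightarrow\beta}}(\Xi_\beta p),\] i.e. $\mathcal V_T$ is globally coarsenable under $\beta$ with quotient $\mathcal V_{T^{\overrightarrow\beta}}$.
   Context: For a set $X$, $\Lambda^X$ denotes the set of distributions over $X$, i.e. functions $p:X\rightarrow[0,1]$ with $\sum_{x\in X}p(x)=1$. For $m\in\mathbb N^+$, an $m$-parent transmission function over $X$ is a function $T:\prod_1^{m+1}X\rightarrow[0,1]$, written $T(x|x_1,\ldots,x_m)$, such that for all $x_1,\ldots,x_m\in X$, $\sum_{x\in X}T(x|x_1,\ldots,x_m)=1$; the set of these is $\Lambda^X_m$. For $T\in\Lambda^X_m$ ($X$ countable), the variation operator $\mathcal V_T:\Lambda^X\rightarrow\Lambda^X$ is $(\mathcal V_Tp)(x)=\sum_{(x_1,\ldots,x_m)\in\prod_1^m X}T(x|x_1,\ldots,x_m)\prod_{i=1}^m p(x_i)$. For a function $\beta:X\rightarrow Y$ and $y\in Y$, $\langle y\rangle_\beta=\{x\in X\mid\beta(x)=y\}$. The projection operator $\Xi_\beta:\Lambda^X\rightarrow\Lambda^Y$ is $(\Xi_\beta p)(y)=\sum_{x\in\langle y\rangle_\beta}p(x)$.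 A transmission function $T\in\Lambda^G_m$ is ambivalent under a surjection $\beta:G\rightarrow K$ if there exists $D\in\Lambda^K_m$ such that for all $k,k_1,\ldots,k_m\in K$ and all $x_1\in\langle k_1\rangle_\beta,\ldots,x_m\in\langle k_m\rangle_\beta$, $\sum_{x\in\langle k\rangle_\beta}T(x|x_1,\ldots,x_m)=D(k|k_1,\ldots,k_m)$; this (unique) $D$ is denoted $T^{\overrightarrow\beta}$. *)

(* Defs.v *)
(* Countable sets are countTypes;
   sums over countable sets are order-independent nonnegative sums [esum]
   in the extended reals. *)
From HB Require Import structures.
From mathcomp Require Import all_boot all_order all_algebra.
From mathcomp Require Import all_classical all_reals.
From mathcomp Require Import ereal esum.

Set Implicit Arguments.
Unset Strict Implicit.
Unset Printing Implicit Defensive.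

Import Order.TTheory GRing.Theory Num.Theory.
Local Open Scope classical_set_scope.
Local Open Scope ring_scope.

Definition psum (R : realType) (X : countType) (A : set X) (f : X -> R) : \bar R :=
  (\esum_(x in A) (f x)%:E)%E.

Definition is_distribution (R : realType) (X : countType) (p : X -> R) : Prop :=
  (forall x, 0 <= p x <= 1) /\ psum setT p = 1%E.

(* T ∈ Λ^X_m ; T x xs stands for T(x | xs_1,...,xs_m) *)
Definition is_transmission (R : realType) (X : countType) (m : nat)
    (T : X -> m.-tuple X -> R) : Prop :=
  forall xs : m.-tuple X, (forall x, 0 <= T x xs <= 1) /\ psum setT (fun x => T x xs) = 1%E.

Definition variation (R : realType) (X : countType) (m : nat)
    (T : X -> m.-tuple X -> R) (p : X -> R) : X -> R :=
  fun x => fine (psum setT (fun xs : m.-tuple X => T x xs * \prod_(i < m) p (tnth xs i))).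

Definition fiber (X Y : Type) (beta : X -> Y) (y : Y) : set X := [set x | beta x = y].

Definition projection (R : realType) (X Y : countType) (beta : X -> Y) (p : X -> R) : Y -> R :=
  fun y => fine (psum (fiber beta y) p).

(* D witnesses that T is ambivalent under beta, i.e. D = T^{->beta} *)
Definition is_theme (R : realType) (G K : countType) (m : nat)
    (T : G -> m.-tuple G -> R) (beta : G -> K) (D : K -> m.-tuple K -> R) : Prop :=
  is_transmission D /\
  forall (k : K) (ks : m.-tuple K) (xs : m.-tuple G),
    (forall i : 'I_m, beta (tnth xs i) = tnth ks i) ->
    psum (fiber beta k) (fun x => T x xs) = (D k ks)%:E.

Definition ambivalent (R : realType) (G K : countType) (m : nat)
    (T : G -> m.-tuple G -> R) (beta : G -> K) : Prop :=
  exists D : K -> m.-tuple K -> R, is_theme T beta D.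

(* Main.v *)
Require Import Defs.
From HB Require Import structures.
From mathcomp Require Import all_boot all_order all_algebra.
From mathcomp Require Import all_classical all_reals.
From mathcomp Require Import ereal esum.
Import Order.TTheory GRing.Theory Num.Theory.
Local Open Scope classical_set_scope.
Local Open Scope ring_scope.
Local Open Scope ereal_scope.
Lemma esumZl (R : realType) (T : choiceType) (I : set T) (a : T -> \bar R) (r : R) :
  (0 <= r)%R -> (forall i, 0 <= a i) ->
  \esum_(i in I) (r%:E * a i) = r%:E * \esum_(i in I) a i.
Proof.
move=> r0 a0; rewrite /esum -ereal_supZl //; last first.
  by apply/set0P; exists 0; exists set0 => //; [exact: fsets_set0|rewrite fsbig_set0].
congr ereal_sup; apply/seteqP; split => x /=.
  by move=> [A HA <-]; exists (\sum_(x \in A) a x); [exists A|rewrite ge0_mule_fsumr].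
by move=> [y [A HA <-] <-]; exists A => //; rewrite ge0_mule_fsumr.
Qed.

Lemma esum_swap (R : realType) (T1 T2 : choiceType) (A : set T1) (B : set T2)
  (a : T1 -> T2 -> \bar R) : (forall i j, 0 <= a i j) ->
  \esum_(i in A) \esum_(j in B) a i j = \esum_(j in B) \esum_(i in A) a i j.
Proof.
move=> a0; rewrite (esum_esum (J := fun _ => B)) // (esum_esum (J := fun _ => A)) //.
rewrite (reindex_esum (A `*`` fun _ => B) _ (fun x => (x.2, x.1))) //; split => //=.
- by move=> [i j] [/=].
- by move=> [i1 i2] [j1 j2] /= _ _ [] -> ->.
- by move=> [i1 i2] [/= ? ?]; exists (i2, i1).
Qed.
Lemma tnth_cons_lift (X : Type) m (x : X) (t : m.-tuple X) (i : 'I_m) :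
  tnth [tuple of x :: t] (lift ord0 i) = tnth t i.
Proof. by rewrite !(tnth_nth x). Qed.

Lemma esum_tuple_prod (R : realType) (X : countType) (p : X -> R) (m : nat)
  (A : 'I_m -> set X) : (forall x, (0 <= p x)%R) ->
  (forall i, \esum_(x in A i) (p x)%:E \is a fin_num) ->
  \esum_(xs in [set xs : m.-tuple X | forall i, A i (tnth xs i)])
     (\prod_(i < m) p (tnth xs i))%:E
  = (\prod_(i < m) fine (\esum_(x in A i) (p x)%:E))%:E.
Proof.
move=> p0; elim: m A => [|m IH] A hA.
  rewrite big_ord0.
  rewrite (_ : [set xs : 0.-tuple X | _] = [set [tuple]]); last first.
    apply/seteqP; split => xs /= _; first by rewrite tuple0.
    by move=> [].
  by rewrite esum_set1 // big_ord0.
pose B := [set t : m.-tuple X | forall i : 'I_m, A (lift ord0 i) (tnth t i)].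
rewrite (reindex_esum (A ord0 `*`` fun _ => B) _ (fun z => [tuple of z.1 :: z.2])); last first.
  split.
  - move=> [x t] [/= h1 h2] i.
    case: (unliftP ord0 i) => [j ->|->].
      by rewrite tnthS.
    by rewrite tnth0.
  - move=> [x1 t1] [x2 t2] _ _ /= /(congr1 val) /= [-> /val_inj ->] //.
  - move=> xs /= h; exists (thead xs, behead_tuple xs).
      split => /=; first exact: (h ord0).
      move=> i; rewrite tnth_behead.
      have -> : (inord i.+1 : 'I_m.+1) = lift ord0 i by apply: val_inj; rewrite /= inordK // ltnS.
      exact: h.
    by rewrite [RHS](tuple_eta xs).
rewrite -(esum_esum (J := fun _ => B) (a := fun x t => (\prod_(i < m.+1) p (tnth [tuple of x :: t] i))%:E)); last by move=> *; rewrite lee_fin prodr_ge0.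
under eq_esum => x _.
  under eq_esum => t _ do rewrite big_ord_recl /= tnth0 EFinM.
  rewrite (@esumZl _ _ _ _ (p x) (p0 x)); last by move=> t; rewrite lee_fin prodr_ge0.
  under eq_esum => t _ do under eq_bigr => i _ do rewrite tnth_cons_lift.
  rewrite (IH (fun i => A (lift ord0 i))) //.
  rewrite muleC.
  over.
rewrite /= esumZl ?prodr_ge0 //; last first.
  move=> i; rewrite fine_ge0 // esum_ge0 // => x _; exact: p0.
rewrite big_ord_recl EFinM muleC; congr (_ * _).
by rewrite fineK.
Qed.
Local Close Scope ereal_scope.
Lemma esum_le_setT (R : realType) (T : choiceType) (A : set T) (a : T -> \bar R) :
  (forall x, (0 <= a x)%E) -> (\esum_(x in A) a x <= \esum_(x in setT) a x)%E.
Proof.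
move=> a0; rewrite esum_mkcond; apply: le_esum => x _.
by case: ifP.
Qed.

Theorem theorem1 (R : realType) (G K : countType) (m : nat) (hm : (0 < m)%N)
  (T : G -> m.-tuple G -> R) (beta : G -> K)
  (hT : is_transmission T)
  (hsurj : forall k : K, exists g : G, beta g = k)
  (hamb : ambivalent T beta)
  (D : K -> m.-tuple K -> R) (hD : is_theme T beta D) :
  forall p : G -> R, is_distribution p ->
    projection beta (variation T p) = variation D (projection beta p).
Proof.
move=> p [hp hp1]; apply: funext => k.
rewrite /projection /variation /psum.
have p0 x : 0 <= p x by case/andP: (hp x).
have T0 x xs : 0 <= T x xs by case/andP: ((hT xs).1 x).
have T1 x xs : T x xs <= 1 by case/andP: ((hT xs).1 x).
have D0 k' ks : 0 <= D k' ks by case/andP: ((hD.1 ks).1 k').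
have P0 (xs : m.-tuple G) : 0 <= \prod_(i < m) p (tnth xs i) by apply: prodr_ge0.
have finA (A : set G) : (\esum_(x in A) (p x)%:E)%E \is a fin_num.
  rewrite ge0_fin_numE; last by apply: esum_ge0 => x _; rewrite lee_fin.
  apply: (le_lt_trans (@esum_le_setT _ _ A (fun x => (p x)%:E) _)).
    by move=> x; rewrite lee_fin.
  by move: hp1; rewrite /psum => ->; rewrite ltry.
have Ptot : (\esum_(xs in setT) (\prod_(i < m) p (tnth xs i))%:E)%E = 1%E.
  have := @esum_tuple_prod _ _ p m (fun _ => setT) p0 (fun _ => finA setT).
  rewrite (_ : [set xs : m.-tuple G | forall i : 'I_m, setT (tnth xs i)] = setT); last first.
    by apply/seteqP; split.
  move=> ->; move: hp1; rewrite /psum => ->.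
  by rewrite big1.
have finI x : (\esum_(xs in setT) (T x xs * \prod_(i < m) p (tnth xs i))%:E)%E \is a fin_num.
  rewrite ge0_fin_numE; last by apply: esum_ge0 => xs _; rewrite lee_fin mulr_ge0.
  apply: (@le_lt_trans _ _ (\esum_(xs in setT) (\prod_(i < m) p (tnth xs i))%:E)%E).
    apply: le_esum => xs _; rewrite lee_fin ler_piMl //.
  by rewrite Ptot ltry.
congr fine.
under eq_esum => x _ do rewrite fineK //.
rewrite esum_swap; last by move=> *; rewrite lee_fin mulr_ge0.
under eq_esum => xs _.
  under eq_esum => x _ do rewrite EFinM muleC.
  rewrite esumZl //; last by move=> x; rewrite lee_fin.
  have := (hD.2) k (map_tuple beta xs) xs; rewrite /psum => ->; last by move=> i; rewrite tnth_map.
  over.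
rewrite /=.
under [RHS]eq_esum => ks _.
  rewrite EFinM.
  rewrite -(@esum_tuple_prod _ _ p m (fun i => fiber beta (tnth ks i)) p0 (fun i => finA _)).
  rewrite -esumZl //.
  under eq_esum => xs hxs.
    have -> : D k ks = D k (map_tuple beta xs).
      by congr D; apply: eq_from_tnth => i; rewrite tnth_map hxs.
    rewrite muleC.
    over.
  over.
rewrite /= esum_esum; last by move=> *; rewrite mule_ge0 // lee_fin.
rewrite (reindex_esum setT _ (fun xs : m.-tuple G => (map_tuple beta xs, xs))) //.
split.
- by move=> xs _; split => // i; rewrite /fiber /= tnth_map.
- by move=> xs ys _ _ [].
- move=> [ks xs] [_ /= hxs]; exists xs => //=; congr pair.
  by apply: eq_from_tnth => i; rewrite tnth_map hxs.
Qed.
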